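(* Assume the standing assumptions and fix a function $h$ satisfying (h1)–(h4). Let $\tau=\min\{n\ge1:S_n\le0\}$ and suppose $\lim_{x\to\infty}\delta_\tau(x)=0$. Then for every stopping time $\sigma$ (with respect to an admissible filtration) with $\mathbf E\sigma<\infty$, we have $\lim_{x\to\infty}\delta_\sigma(x)=0$.
   Context: Standing assumptions: $\{\xi_n\}_{n\ge1}$ are i.i.d. real random variables with common distribution function $F$ and finite mean $\mathbf E\xi_1=-m<0$. $F$ is long-tailed: $\overline F(x)=1-F(x)>0$ for all $x$, and $\overline F(x-c)/\overline F(x)\to1$ as $x\to\infty$ for every fixed $c>0$. Notation: $S_0=0$ and $S_n=\sum_{i=1}^n\xi_i$. Admissible filtration: stopping times are taken with respect to a filtration $\{\mathcal F_n\}_{n\ge0}$ such that $\xi_n$ is $\mathcal F_n$-measurable and $\xi_{n+1}$ is independent of $\mathcal F_n$. The function $h:\mathbb R_+\to\mathbb R_+$ satisfies: - (h1) $h(x)\le x/2$; - (h2) $h(x)\to\infty$; - (h3) $\overline F(x-h(x))/\overline F(x)\to1$ as $x\to\infty$; - (h4) there exists $x_0$ with $h(x+t)\le h(x)+t$ for all $x\ge x_0$, $t\ge0$. For $x\ge0$, let $\mu(x)=\min\{n:S_n>x\}$, with $\min\emptyset=\infty$. For a stopping time $\sigma$, define $$A_{\sigma,2}(x)=\{\mu(x)\le\sigma,\ S_{\mu(x)-1}>h(x)\},\qquad \delta_\sigma(x)=\sup_{y\ge x}\frac{\mathbf P(A_{\sigma,2}(y))}{\overline F(y)}.$$ *)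

(* Defs.v *)
From HB Require Import structures.
From mathcomp Require Import all_boot all_order all_algebra.
From mathcomp Require Import all_classical all_reals all_analysis.
Set Implicit Arguments. Unset Strict Implicit. Unset Printing Implicit Defensive.
Import Order.TTheory GRing.Theory Num.Theory.
Import numFieldNormedType.Exports.
Local Open Scope classical_set_scope.
Local Open Scope ring_scope.

(* Random walk S_n = xi_1 + ... + xi_n (the value xi 0 is ignored). *)
Definition rwS {T : Type} {R : realType} (xi : nat -> T -> R) (n : nat) (w : T) : R :=
  \sum_(1 <= i < n.+1) xi i w.

(* first n with p n, or None (= infinity) *)
Definition first_hit (p : pred nat) : option nat :=
  match pselect (exists n, p n) with
  | left h => Some (ex_minn h)
  | right _ => None
  end.

(* n <= s, with None standing for +infinity *)
Definition le_opt (n : nat) (s : option nat) : bool :=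
  if s is Some k then (n <= k)%N else true.

Definition mu_time {T : Type} {R : realType} (xi : nat -> T -> R) (x : R) (w : T) :=
  first_hit (fun n => x < rwS xi n w).

Definition tau_time {T : Type} {R : realType} (xi : nat -> T -> R) (w : T) :=
  first_hit (fun n => (0 < n)%N && (rwS xi n w <= 0)).

Definition A2 {T : Type} {R : realType} (xi : nat -> T -> R) (h : R -> R)
  (sigma : T -> option nat) (x : R) : set T :=
  [set w | match mu_time xi x w with
           | Some n => le_opt n (sigma w) && (h x < rwS xi n.-1 w)
           | None => false
           end].

Section Prob.
Context {d : measure_display} {T : measurableType d} {R : realType}.
Variable P : probability T R.

Definition cdf (X : T -> R) (y : R) : R := fine (P [set w | X w <= y]).
Definition tailF (X : T -> R) (y : R) : R := 1 - cdf X y.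

Definition delta (xi : nat -> T -> R) (h : R -> R) (sigma : T -> option nat)
  (x : R) : \bar R :=
  ereal_sup [set ((fine (P (A2 xi h sigma y))) / tailF (xi 1%N) y)%:E
            | y in [set y | x <= y]].

Definition mutually_indep (xi : nat -> T -> R) : Prop :=
  forall (s : seq nat) (B : nat -> set R), uniq s -> all (fun i => 0 < i)%N s ->
    (forall i, measurable (B i)) ->
    P (\big[setI/setT]_(i <- s) (xi i @^-1` B i)) =
    (\prod_(i <- s) P (xi i @^-1` B i))%E.

Definition ident_distr (xi : nat -> T -> R) : Prop :=
  forall n (B : set R), (0 < n)%N -> measurable B ->
    P (xi n @^-1` B) = P (xi 1%N @^-1` B).

Definition admissible_filtration (xi : nat -> T -> R) (Fn : nat -> set (set T)) : Prop :=
  [/\ (forall n, sigma_algebra setT (Fn n)),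
      (forall n A, Fn n A -> measurable A),
      (forall n A, Fn n A -> Fn n.+1 A),
      (forall n B, (0 < n)%N -> measurable B -> Fn n (xi n @^-1` B)) &
      (forall n A B, Fn n A -> measurable B ->
          P (A `&` xi n.+1 @^-1` B) = (P A * P (xi n.+1 @^-1` B))%E)].

Definition stopping_time (Fn : nat -> set (set T)) (sigma : T -> option nat) : Prop :=
  forall n, Fn n [set w | sigma w = Some n].

Definition opt_to_ereal (s : option nat) : \bar R :=
  if s is Some n then (n%:R)%:E else +oo%E.

Definition finite_mean_time (sigma : T -> option nat) : Prop :=
  (\int[P]_w opt_to_ereal (sigma w) < +oo)%E.

End Prob.

(* Main.v *)
Require Import Defs.
From HB Require Import structures.
From mathcomp Require Import all_boot all_order all_algebra.
From mathcomp Require Import all_classical all_reals all_analysis.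
From mathcomp Require Import zify ring lra.
Import Order.TTheory GRing.Theory Num.Theory.
Import numFieldNormedType.Exports.
Set Implicit Arguments. Unset Strict Implicit. Unset Printing Implicit Defensive.
Local Open Scope classical_set_scope.
Local Open Scope ring_scope.

Lemma first_hit_Some (p : pred nat) n :
  p n -> (forall i, (i < n)%N -> ~~ p i) -> first_hit p = Some n.
Proof.
move=> pn hi; rewrite /first_hit; case: pselect => [h|]; last by move=> /(_ (ex_intro _ n pn)).
congr Some; case: ex_minnP => k pk kmin; apply/eqP; rewrite eqn_leq kmin //.
by rewrite leqNgt; apply/negP => /hi; rewrite pk.
Qed.

Lemma first_hitP (p : pred nat) n :
  first_hit p = Some n -> p n /\ (forall i, (i < n)%N -> ~~ p i).
Proof.
rewrite /first_hit; case: pselect => // h [<-]; case: ex_minnP => k pk kmin.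
split=> // i ik; apply/negP => /kmin; rewrite leqNgt ik //.
Qed.

Lemma last_min (R : realType) (f : nat -> R) N :
  exists j, [/\ (j <= N)%N, (forall k, (k <= j)%N -> f j <= f k) &
     (forall k, (j < k)%N -> (k <= N)%N -> f j < f k)].
Proof.
suff : exists j, [/\ (j <= N)%N, (forall k, (k <= N)%N -> f j <= f k) &
     (forall k, (j < k)%N -> (k <= N)%N -> f j < f k)].
  by case=> j [jN h1 h2]; exists j; split => // k kj; apply h1; apply: leq_trans jN.
elim: N => [|N [j [jN h1 h2]]].
  exists 0%N; split => // [k|k]; first by rewrite leqn0 => /eqP ->.
  by move=> k0 k0'; move: (leq_trans k0 k0').
have [fl|fg] := leP (f N.+1) (f j).
  exists N.+1; split => // [k|k]; last by move=> a b; move: (leq_ltn_trans b a); rewrite ltnn.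
  rewrite leq_eqVlt => /orP[/eqP -> //|]; rewrite ltnS => kN.
  exact: le_trans fl (h1 _ kN).
exists j; split; first exact: leqW.
  move=> k; rewrite leq_eqVlt => /orP[/eqP -> |]; first exact: ltW.
  by rewrite ltnS; apply: h1.
move=> k jk; rewrite leq_eqVlt => /orP[/eqP -> //|]; rewrite ltnS; exact: h2.
Qed.

Lemma rwS_split {T : Type} {R : realType} (xi : nat -> T -> R) j k w :
  rwS xi (j + k) w = rwS xi j w + \sum_(i < k) xi (j + 1 + i)%N w.
Proof.
rewrite /rwS (@big_cat_nat _ _ _ j.+1) //=; last by rewrite ltnS leq_addr.
congr (_ + _); rewrite -{1}[j.+1]add0n big_addn subSS addKn big_mkord.
by apply: eq_bigr => i _; rewrite addnC addn1.
Qed.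

Section Indep.
Context {d : measure_display} {T : measurableType d} {R : realType}.
Variable P : probability T R.
Variable xi : nat -> T -> R.
Variable Fn : nat -> set (set T).
Hypothesis hadm : admissible_filtration P xi Fn.
Hypothesis hid : ident_distr P xi.

Lemma Fn_sa k : sigma_algebra setT (Fn k).
Proof. by case: hadm. Qed.

Lemma Fn_meas k A : Fn k A <-> @measurable _ (g_sigma_algebraType (Fn k)) A.
Proof.
by split => h; [apply: sub_sigma_algebra | rewrite -(sigma_algebra_id (Fn_sa k))].
Qed.

Lemma Fn_measT k A : Fn k A -> measurable A.
Proof. by case: hadm => _ h _ _ _; apply: h. Qed.

Lemma Fn_mono j k A : (j <= k)%N -> Fn j A -> Fn k A.
Proof.
case: hadm => _ _ hm _ _; move=> /subnK <-; elim: (k - j)%N => // n IH /IH.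
by rewrite addSn; apply: hm.
Qed.

Lemma Fn_xi n k B : (0 < n)%N -> (n <= k)%N -> measurable B -> Fn k (xi n @^-1` B).
Proof. by case: hadm => _ _ _ hx _ n0 nk mB; apply: (Fn_mono nk); apply: hx. Qed.

Lemma Fn_setI k A B : Fn k A -> Fn k B -> Fn k (A `&` B).
Proof. by move=> /Fn_meas hA /Fn_meas hB; apply/Fn_meas; apply: measurableI. Qed.

Definition rectj j N (B : nat -> set R) : set T :=
  [set w | forall i, (i < N)%N -> B i (xi (j + 1 + i)%N w)].

Lemma rectjS j N B : rectj j N.+1 B = rectj j N B `&` xi (j + 1 + N)%N @^-1` B N.
Proof.
apply/seteqP; split => w.
  by move=> h; split; [move=> i iN; apply: h; apply: ltnW|apply: h].
move=> [h1 h2] i; rewrite ltnS leq_eqVlt => /orP[/eqP -> //|]; exact: h1.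
Qed.

Lemma rectj_F j N B : (forall i, measurable (B i)) -> Fn (j + N) (rectj j N B).
Proof.
move=> mB; elim: N => [|N IH].
  rewrite (_ : rectj j 0 B = setT); last by apply/seteqP; split.
  by apply/Fn_meas; exact: measurableT.
rewrite rectjS; apply: Fn_setI; first by apply: (Fn_mono _ IH); rewrite addnS.
by apply: Fn_xi => //; [rewrite addn1 addSn|rewrite addn1 addSn addnS].
Qed.

Lemma rect_indep N j G B : Fn j G -> (forall i, measurable (B i)) ->
  P (G `&` rectj j N B) = (P G * \prod_(i < N) P (xi (j + 1 + i)%N @^-1` B i))%E.
Proof.
move=> FG mB; elim: N => [|N IH].
  rewrite big_ord0 mule1 (_ : rectj j 0 B = setT) ?setIT //.
  by apply/seteqP; split.
rewrite rectjS setIA big_ord_recr /= muleA -IH.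
case: hadm => _ _ _ _ hi.
have := hi (j + N)%N (G `&` rectj j N B) (B N); rewrite (_ : (j + N).+1 = j + 1 + N)%N; last by rewrite addn1 addSn.
apply; last exact: mB.
by apply: Fn_setI => //; [apply: (Fn_mono _ FG); apply: leq_addr| apply: rectj_F].
Qed.


Lemma Pfin (A : set T) : measurable A -> P A \is a fin_num.
Proof. by move=> mA; apply: fin_num_measure. Qed.

Definition Rect (N : nat) (B : nat -> set R) : set (nat -> R) :=
  [set y | forall i, (i < N)%N -> B i (y i)].
Definition Gen : set (set (nat -> R)) :=
  [set A | exists N B, (forall i, measurable (B i)) /\ A = Rect N B].
Definition PY := g_sigma_algebraType Gen.
Definition pathj j (w : T) : PY := fun i => xi (j + 1 + i)%N w.

Lemma Gen_setI : setI_closed Gen.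
Proof.
move=> A1 A2 [N1 [B1 [mB1 ->]]] [N2 [B2 [mB2 ->]]].
exists (maxn N1 N2), (fun i => (if (i < N1)%N then B1 i else setT) `&`
                               (if (i < N2)%N then B2 i else setT)); split.
  by move=> i; apply: measurableI; case: ifP => // _; exact: measurableT.
apply/seteqP; split => y.
  move=> [h1 h2] i _; split; case: ifP => // iN; [exact: h1|exact: h2].
move=> h; split => i iN.
  have [] := h i; first by rewrite leq_max iN.
  by rewrite iN.
have [] := h i; first by rewrite leq_max iN orbT.
by rewrite iN.
Qed.

Definition Qj j (A : set PY) :=
  [/\ measurable (pathj 0 @^-1` A), measurable (pathj j @^-1` A) &
      forall G, Fn j G -> P (G `&` pathj j @^-1` A) = (P G * P (pathj 0 @^-1` A))%E].

Lemma Qj_rect j N B : (forall i, measurable (B i)) -> Qj j (Rect N B).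
Proof.
move=> mB.
have e k : pathj k @^-1` Rect N B = rectj k N B by [].
rewrite /Qj !e; split.
- by apply: (Fn_measT (k := (0 + N)%N)); apply: rectj_F.
- by apply: (Fn_measT (k := (j + N)%N)); apply: rectj_F.
move=> G FG; rewrite rect_indep //.
have FT : Fn 0 setT by apply/Fn_meas; exact: measurableT.
rewrite -[rectj 0 N B]setTI rect_indep // probability_setT mul1e.
congr (_ * _)%E; apply: eq_bigr => i _.
have h1 : (0 < j + 1 + i)%N by rewrite addn1.
  have h0 : (0 < 0 + 1 + i)%N by rewrite addn1.
  by rewrite (hid h1 (mB i)) (hid h0 (mB i)).
Qed.

Lemma triv_pre (U V : Type) (f : U -> V) (F : nat -> set V) :
  trivIset setT F -> trivIset setT (fun n => f @^-1` F n).
Proof.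
move=> /trivIsetP tF; apply/trivIsetP => i k _ _ ik.
by rewrite -preimage_setI tF // preimage_set0.
Qed.

End Indep.

Section Indep2.
Context {d : measure_display} {T : measurableType d} {R : realType}.
Variable P : probability T R.
Variable xi : nat -> T -> R.
Variable Fn : nat -> set (set T).
Hypothesis hadm : admissible_filtration P xi Fn.
Hypothesis hid : ident_distr P xi.

Lemma indep_path' j (A : set (@PY R)) : measurable A -> Qj P xi Fn j A.
Proof.
apply: (@dynkin_induction _ (@PY R) (@Gen R)).
- by [].
- exact: Gen_setI.
- rewrite /Qj !preimage_setT; split; try exact: measurableT.
  by move=> G _; rewrite setIT probability_setT mule1.
- move=> _ [N [B [mB ->]]]; exact: (Qj_rect hadm hid).
- move=> S _ [m0 mj hG].
  have e k : pathj xi k @^-1` (~` S) = ~` (pathj xi k @^-1` S) by [].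
  rewrite /Qj !e; split.
  + exact: measurableC.
  + exact: measurableC.
  move=> G FG; have mG := Fn_measT hadm FG.
  rewrite -setDE measureD //; last by rewrite ltey_eq (Pfin P mG).
  change (P G - P (G `&` pathj xi j @^-1` S) = P G * P (~` pathj xi 0 @^-1` S))%E.
  rewrite hG //.
  rewrite probability_setC //.
  rewrite muleBr; last by rewrite fin_num_adde_defl // fin_numN; exact: Pfin.
  by rewrite mule1.
  by apply: Pfin.
- move=> F mF tF hF.
  have e k : pathj xi k @^-1` (\bigcup_n F n) = \bigcup_n (pathj xi k @^-1` F n).
    exact: preimage_bigcup.
  rewrite /Qj !e; split.
  + by apply: bigcupT_measurable => n; case: (hF n).
  + by apply: bigcupT_measurable => n; case: (hF n).
  move=> G FG; have mG := Fn_measT hadm FG.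
  rewrite setI_bigcupr !measure_bigcup.
  + rewrite -(fineK (Pfin P mG)) -nneseriesZl //; apply: eq_eseriesr => n _.
    case: (hF n) => _ _ h; rewrite fineK; first exact: h.
    exact: Pfin.
  + by move=> n _; case: (hF n).
  + exact: triv_pre.
  + by move=> n _; case: (hF n) => _ mj _; apply: measurableI.
  + by apply: trivIset_setIl; apply: triv_pre.
Qed.
End Indep2.

Section MeasX.
Context {d : measure_display} {X : measurableType d}.

Lemma mset_bool (b : X -> bool) : measurable_fun setT b -> measurable [set x | b x].
Proof.
move=> mb; have := mb measurableT [set true] I.
by rewrite setTI; congr measurable; apply/seteqP; split => x /=.
Qed.

Lemma mset_cap (b : nat -> X -> bool) : (forall i, measurable_fun setT (b i)) ->
  measurable [set x | forall i, b i x].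
Proof.
move=> mb; rewrite (_ : [set x | forall i, b i x] = \bigcap_i [set x | b i x]).
  by apply: bigcapT_measurable => i; apply: mset_bool.
apply/seteqP; split => x /= h.
  by move=> i _; exact: h.
by move=> i; exact: (h i I).
Qed.

Lemma mset_cup (A : nat -> set X) : (forall i, measurable (A i)) ->
  measurable [set x | exists i, A i x].
Proof.
move=> mA; rewrite (_ : [set x | exists i, A i x] = \bigcup_i A i).
  exact: bigcupT_measurable.
by apply/seteqP; split => x /= [i]; exists i.
Qed.

Lemma mfun_imply (b : bool) (f : X -> bool) : measurable_fun setT f ->
  measurable_fun setT (fun x => b ==> f x).
Proof. by case: b => // _; exact: measurable_cst. Qed.

End MeasX.

Section Path.
Variable R : realType.

Lemma coord_meas i : measurable_fun setT (fun y : @PY R => y i).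
Proof.
move=> _ B mB; rewrite setTI; apply: sub_sigma_algebra.
exists i.+1, (fun k => if k == i then B else setT); split.
  by move=> k; case: ifP => // _; exact: measurableT.
apply/seteqP; split => y /=.
  by move=> yB k _; case: ifP => // /eqP ->.
by move=> h; have := h i; rewrite ltnSn eqxx; apply.
Qed.

Definition psum (k : nat) (y : nat -> R) : R := \sum_(i < k) y i.

Lemma psum_meas k : measurable_fun setT (psum k : @PY R -> R).
Proof. by apply: measurable_sum => i; exact: coord_meas. Qed.

Definition futb (h : R -> R) (x z : R) (m : nat) (y : nat -> R) : bool :=
  (x + z < psum m y) && (h x + z < psum m.-1 y).
Definition futc (x z : R) (m i : nat) (y : nat -> R) : bool :=
  ((i < m)%N ==> (psum i y <= x + z)) && (((0 < i) && (i < m))%N ==> (0 < psum i y)).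

Definition Fut h x z : set (nat -> R) :=
  [set y | exists m, futb h x z m y /\ forall i, futc x z m i y].

Lemma Fut_meas h x z : measurable (Fut h x z : set (@PY R)).
Proof.
apply: (mset_cup (A := fun m => [set y : @PY R | futb h x z m y] `&` [set y | forall i, futc x z m i y])) => m.
apply: measurableI.
  apply: mset_bool; apply: measurable_and; apply: measurable_realfun.measurable_fun_ltr;
    (exact: measurable_cst || exact: psum_meas).
apply: mset_cap => i; apply: measurable_and; apply: mfun_imply.
  by apply: measurable_realfun.measurable_fun_ler; (exact: measurable_cst || exact: psum_meas).
by apply: measurable_realfun.measurable_fun_ltr; (exact: measurable_cst || exact: psum_meas).
Qed.
End Path.

Local Notation mfD := measurable_realfun.measurable_funD.
Local Notation mfB := measurable_realfun.measurable_funB.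
Local Notation mfN := measurable_realfun.measurable_funN.
Local Notation mfM := measurable_realfun.measurable_funM.
Local Notation mfltr := measurable_realfun.measurable_fun_ltr.
Local Notation mfler := measurable_realfun.measurable_fun_ler.

Lemma mfun_set {d} {X : measurableType d} (b : X -> bool) :
  measurable [set x | b x] -> measurable_fun setT b.
Proof.
move=> mb; apply: (measurable_fun_bool true); rewrite setTI.
by congr measurable: mb; apply/seteqP; split => x /=.
Qed.

Lemma mset_capS {d} {X : measurableType d} (A : nat -> set X) :
  (forall i, measurable (A i)) -> measurable [set x | forall i, A i x].
Proof.
move=> mA; rewrite (_ : [set x | forall i, A i x] = \bigcap_i A i).
  by apply: bigcapT_measurable.
apply/seteqP; split => x /= h.
  by move=> i _; exact: h.
by move=> i; exact: (h i I).
Qed.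

Lemma mset_imp {d} {X : measurableType d} (b : bool) (A : set X) :
  (b -> measurable A) -> measurable [set x | b -> A x].
Proof.
case: b => mA.
  by congr measurable: (mA isT); apply/seteqP; split => x /=; [move=> ? ?|apply].
by rewrite (_ : [set x | false -> A x] = setT) //; apply/seteqP; split.
Qed.

Lemma first_hit_meas {d} {X : measurableType d} (p : nat -> X -> bool) n :
  (forall k, measurable_fun setT (p k)) ->
  measurable [set w | first_hit (fun k => p k w) = Some n].
Proof.
move=> mp.
rewrite (_ : [set w | _] = [set w | p n w] `&` [set w | forall i, (i < n)%N -> ~~ p i w]).
  apply: measurableI; first exact: mset_bool.
  apply: mset_capS => i; apply: mset_imp => _; apply: mset_bool.
  exact: measurable_neg.
apply/seteqP; split => w /=.
  by move/first_hitP.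
by case=> h1 h2; apply: first_hit_Some.
Qed.

Section Main.
Context {d : measure_display} {T : measurableType d} {R : realType}.
Variable P : probability T R.
Variable xi : nat -> T -> R.
Variable Fn : nat -> set (set T).
Hypothesis hadm : admissible_filtration P xi Fn.
Hypothesis hid : ident_distr P xi.
Hypothesis mxi : forall n, measurable_fun setT (xi n).
Variable h : R -> R.

Local Notation S := (rwS xi).

Lemma S_meas n : measurable_fun setT (S n).
Proof. by apply: measurable_sum => i; exact: mxi. Qed.

Lemma S_meas_j j n : (n <= j)%N ->
  measurable_fun setT (S n : g_sigma_algebraType (Fn j) -> R).
Proof.
elim: n => [_|n IH nj].
  rewrite (_ : S 0 = fun=> 0); first exact: measurable_cst.
  by apply/funext => w; rewrite /rwS big_geq.
rewrite (_ : S n.+1 = S n \+ xi n.+1).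
  apply: mfD; first by apply: IH; apply: ltnW.
  move=> _ B mB; rewrite setTI; apply/(Fn_meas hadm).
  exact: (Fn_xi hadm).
by apply/funext => w; rewrite /rwS big_nat_recr.
Qed.


Lemma psum_path j k w : psum k (pathj xi j w) = S (j + k) w - S j w.
Proof. by rewrite rwS_split [S j w + _]addrC addrK. Qed.

Lemma pathj_meas j : measurable_fun setT (pathj xi j : T -> @PY R).
Proof. by move=> _ A mA; rewrite setTI; case: (indep_path' hadm hid j mA). Qed.

Lemma negS_meas j : measurable_fun setT (fun w => - S j w).
Proof. exact: (mfN (S_meas j)). Qed.

Lemma psum_path_meas j m : measurable_fun setT (fun w => psum m (pathj xi j w)).
Proof. exact: (measurableT_comp (@psum_meas R m) (pathj_meas j)). Qed.

Lemma Hset_meas x j : measurable [set w | Fut h x (- S j w) (pathj xi j w)].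
Proof.
apply: (mset_cup (A := fun m => [set w | futb h x (- S j w) m (pathj xi j w)] `&`
  [set w | forall i, futc x (- S j w) m i (pathj xi j w)])) => m.
have mc c : measurable_fun setT (fun w => c + - S j w).
  by apply: mfD; [exact: measurable_cst| exact: negS_meas].
apply: measurableI.
  apply: mset_bool; apply: measurable_and; apply: mfltr;
    (exact: mc || exact: psum_path_meas).
apply: mset_cap => i; apply: measurable_and; apply: mfun_imply.
  by apply: mfler; (exact: mc || exact: psum_path_meas).
by apply: mfltr; [exact: measurable_cst| exact: psum_path_meas].
Qed.


Variable sig : T -> option nat.
Hypothesis hst : stopping_time Fn sig.

Lemma le_optE n s : le_opt n s <-> forall k, (k < n)%N -> s <> Some k.
Proof.
case: s => [m|] /=; split => //.
- by move=> nm k kn [km]; move: kn; rewrite -km ltnNge nm.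
- by move=> h'; rewrite leqNgt; apply/negP => /h'; apply.
Qed.

Lemma leopt_F j n : (n <= j.+1)%N -> Fn j [set w | le_opt n (sig w)].
Proof.
move=> nj; apply/(Fn_meas hadm).
rewrite (_ : [set w | _] = [set w | forall k, (k < n)%N -> ~ [set w | sig w = Some k] w]).
  apply: mset_capS => k; apply: mset_imp => kn; apply: measurableC.
  apply/(Fn_meas hadm); apply: (Fn_mono hadm _ (hst k)).
  by rewrite -ltnS; exact: leq_trans kn nj.
by apply/seteqP; split => w /= /le_optE.
Qed.

Lemma leopt_meas n : measurable [set w | le_opt n (sig w)].
Proof. exact: (Fn_measT hadm (leopt_F (j := n) (leqnSn n))). Qed.

Definition G0 j := [set w | le_opt j.+1 (sig w) /\ forall k, (k <= j)%N -> S j w <= S k w].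

Lemma G0_F j : Fn j (G0 j).
Proof.
rewrite (_ : G0 j = [set w | le_opt j.+1 (sig w)] `&` [set w | forall k, (k <= j)%N -> S j w <= S k w]) //.
apply: (Fn_setI hadm); first exact: leopt_F.
apply/(Fn_meas hadm); apply: mset_capS => k; apply: mset_imp => kj.
by apply: mset_bool; apply: mfler; apply: S_meas_j.
Qed.

Definition slice j l n := [set w | (n%:R <= (l.+1)%:R * - S j w) && ((l.+1)%:R * - S j w < (n.+1)%:R)].

Lemma slice_F j l n : Fn j (slice j l n).
Proof.
apply/(Fn_meas hadm); apply: mset_bool; apply: measurable_and.
  apply: mfler; first exact: measurable_cst.
  by apply: mfM; [exact: measurable_cst|apply: mfN; exact: S_meas_j].
apply: mfltr; last exact: measurable_cst.
by apply: mfM; [exact: measurable_cst|apply: mfN; exact: S_meas_j].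
Qed.


Lemma S0 w : S 0 w = 0.
Proof. by rewrite /rwS big_geq. Qed.

Definition Hs x j := G0 j `&` [set w | Fut h x (- S j w) (pathj xi j w)].

Lemma decomp x : 0 <= x -> A2 xi h sig x `<=` \bigcup_j Hs x j.
Proof.
move=> x0 w; rewrite /A2 /=; case E: (mu_time xi x w) => [n|] //.
move=> /andP[hn hS]; have [pn pi] := first_hitP E.
have n0 : (0 < n)%N.
  by case: n pn {E pi hn hS} => // /=; rewrite S0 ltNge x0.
have [j [jn h1 h2]] := last_min (fun k => S k w) n.-1.
have jn' : (j < n)%N by rewrite (leq_ltn_trans jn) // prednK.
exists j => //; split.
  split => //; move: hn; case: (sig w) => //= k; exact: leq_trans.
exists (n - j)%N; split.
  rewrite /futb !psum_path subnKC ?(ltnW jn') // !ltrD2r pn /=.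
  by rewrite (_ : (j + (n - j).-1 = n.-1)%N) //; lia.
move=> i; apply/andP; split; apply/implyP.
  move=> im; rewrite psum_path lerD2r; rewrite leNgt; apply: pi.
  by rewrite -ltn_subRL.
move=> /andP[i0 im]; rewrite psum_path subr_gt0; apply: h2.
  by rewrite -{1}(addn0 j) ltn_add2l.
by rewrite -ltnS prednK // -ltn_subRL.
Qed.


Lemma fut_tau x0 x z w :
  (forall x t, x0 <= x -> 0 <= t -> h (x + t) <= h x + t) ->
  x0 <= x -> 0 <= z -> Fut h x z (pathj xi 0 w) -> A2 xi h (tau_time xi) (x + z) w.
Proof.
move=> hh4 xx0 z0 [m [/andP[f1 f2] fc]].
have ps k : psum k (pathj xi 0 w) = S k w by rewrite psum_path S0 subr0.
rewrite !ps in f1 f2.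
rewrite /A2 /= /mu_time.
have -> : first_hit (fun n => x + z < S n w) = Some m.
  apply: first_hit_Some => // i im; rewrite -leNgt.
  by have /andP[/implyP/(_ im) + _] := fc i; rewrite ps.
apply/andP; split.
  case E: (tau_time xi w) => [k|] //=; have [/andP[k0 Sk] _] := first_hitP E.
  rewrite leqNgt; apply/negP => km.
  have /andP[_ /implyP] := fc k; rewrite k0 km ps => /(_ isT).
  by rewrite ltNge Sk.
exact: le_lt_trans (hh4 _ _ xx0 z0) f2.
Qed.


Lemma leopt_meas_gen (s : T -> option nat) n : (forall k, measurable [set w | s w = Some k]) ->
  measurable [set w | le_opt n (s w)].
Proof.
move=> ms.
rewrite (_ : [set w | _] = [set w | forall k, (k < n)%N -> ~ [set w | s w = Some k] w]).
  by apply: mset_capS => k; apply: mset_imp => kn; apply: measurableC.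
by apply/seteqP; split => w /= /le_optE.
Qed.

Lemma A2_meas (s : T -> option nat) x : (forall k, measurable [set w | s w = Some k]) ->
  measurable (A2 xi h s x).
Proof.
move=> ms.
rewrite (_ : A2 xi h s x = [set w | exists n, ([set w | mu_time xi x w = Some n] `&`
   [set w | le_opt n (s w)] `&` [set w | h x < S n.-1 w]) w]).
  apply: mset_cup => n; apply: measurableI; first apply: measurableI.
  - rewrite /mu_time; apply: (first_hit_meas (p := fun k w => x < S k w)) => k.
    by apply: mfltr; [exact: measurable_cst|exact: S_meas].
  - exact: leopt_meas_gen.
  - by apply: mset_bool; apply: mfltr; [exact: measurable_cst|exact: S_meas].
apply/seteqP; split => w; rewrite /A2 /=.
  by case E: (mu_time xi x w) => [n|] // /andP[h1 h2]; exists n.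
by case=> n [[-> h1 h2]]; rewrite h1 h2.
Qed.

Lemma tau_meas k : measurable [set w | tau_time xi w = Some k].
Proof.
apply: (first_hit_meas (p := fun k w => (0 < k)%N && (S k w <= 0))) => n.
apply: measurable_and; first exact: measurable_cst.
by apply: mfler; [exact: S_meas|exact: measurable_cst].
Qed.

Lemma sig_meas k : measurable [set w | sig w = Some k].
Proof. exact: (Fn_measT hadm (hst k)). Qed.


Definition Eset x j l := [set w | exists n,
  (G0 j `&` slice j l n `&` pathj xi j @^-1` Fut h x ((n.+1)%:R / (l.+1)%:R)) w].

Lemma discr_aux (Z gap : R) (k l : nat) : 0 <= Z -> ((k.+1)%:R)^-1 < gap -> (k <= l)%N ->
  let n := Num.truncn ((l.+1)%:R * Z) in
  let z' := (n.+1)%:R / (l.+1)%:R in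
  [/\ (n%:R <= (l.+1)%:R * Z) && ((l.+1)%:R * Z < (n.+1)%:R), Z <= z' & z' < Z + gap].
Proof.
move=> Z0 hg kl n z'.
have c0 : 0 < (l.+1)%:R :> R by rewrite ltr0n.
have cZ : 0 <= (l.+1)%:R * Z by rewrite mulr_ge0 // ler0n.
have /andP[t1 t2] := truncn_itv cZ.
split; first by rewrite t1 t2.
- by rewrite /z' ler_pdivlMr // mulrC ltW.
have hz : z' * (l.+1)%:R = (n.+1)%:R by rewrite /z' mulfVK // gt_eqF.
have hq : 1 <= ((k.+1)%:R)^-1 * (l.+1)%:R :> R.
  by rewrite mulrC ler_pdivlMr ?ltr0n // mul1r ler_nat ltnS.
have q0 : 0 < ((k.+1)%:R)^-1 :> R by rewrite invr_gt0 ltr0n.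
move: t1 t2 hz hq hg; rewrite -/n -[(n.+1)%:R]natr1.
set c := (l.+1)%:R; set q := ((k.+1)%:R)^-1; set N := n%:R.
move=> t1 t2 hz hq hg.
have : z' <= Z + q.
  rewrite leNgt; apply/negP => hlt.
  have : (Z + q) * c < z' * c by rewrite ltr_pM2r.
  nra.
lra.
Qed.


Lemma Hs_sub x j : Hs x j `<=` [set w | exists k, forall l, (k <= l)%N -> Eset x j l w].
Proof.
move=> w [[Gs Gmin] [m [/andP[f1 f2] fc]]].
set Z := - S j w in f1 f2 fc.
have Z0 : 0 <= Z by rewrite /Z oppr_ge0 -(S0 w) Gmin.
set gap := Num.min (psum m (pathj xi j w) - (x + Z)) (psum m.-1 (pathj xi j w) - (h x + Z)).
have gap0 : 0 < gap by rewrite lt_min !subr_gt0 f1 f2.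
exists (Num.truncn gap^-1) => l kl.
have hk : ((Num.truncn gap^-1).+1%:R)^-1 < gap.
  rewrite -[X in _ < X]invrK ltf_pV2 ?posrE ?ltr0n ?invr_gt0 //.
  have gi : 0 <= gap^-1 by rewrite invr_ge0 ltW.
  by have /andP[_ ] := truncn_itv gi.
have [sl zz zg] := discr_aux Z0 hk kl.
exists (Num.truncn ((l.+1)%:R * Z)); split; first split => //.
have [g1 g2] : gap <= psum m (pathj xi j w) - (x + Z) /\ gap <= psum m.-1 (pathj xi j w) - (h x + Z).
  by split; rewrite ge_min lexx ?orbT.
exists m; split.
  rewrite /futb; move: zz zg; set z' := _ / _ => zz zg.
  clearbody gap Z z'; apply/andP; split; lra.
move=> i; have /andP[/implyP c1 c2] := fc i; apply/andP; split => //.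
apply/implyP => /c1 hi; move: zz zg; set z' := _ / _ => zz zg.
clearbody gap Z z'; lra.
Qed.


Lemma G0_meas j : measurable (G0 j).
Proof. exact: (Fn_measT hadm (G0_F j)). Qed.

Lemma slice_meas j l n : measurable (slice j l n).
Proof. exact: (Fn_measT hadm (slice_F j l n)). Qed.

Lemma futpre_meas j x z : measurable (pathj xi j @^-1` Fut h x z).
Proof.
have := pathj_meas j measurableT (Fut_meas h x z); rewrite setTI; exact.
Qed.

Lemma Eset_meas x j l : measurable (Eset x j l).
Proof.
apply: mset_cup => n; apply: measurableI; first apply: measurableI.
- exact: G0_meas.
- exact: slice_meas.
- exact: futpre_meas.
Qed.

Lemma slice_triv j l : trivIset setT (fun n => G0 j `&` slice j l n).
Proof.
apply/trivIsetP => n n' _ _ nn'; apply/seteqP; split => // w.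
move=> [[_ /andP[a1 a2]] [_ /andP[b1 b2]]]; move: nn' => /negP; apply.
have e1 := le_lt_trans a1 b2; have e2 := le_lt_trans b1 a2.
rewrite ltr_nat ltnS in e1; rewrite ltr_nat ltnS in e2.
by rewrite eqn_leq e1 e2.
Qed.

Lemma PE_bound x j l (K : R) : 0 <= K ->
  (forall z, 0 <= z -> (P (pathj xi 0 @^-1` Fut h x z) <= K%:E)%E) ->
  (P (Eset x j l) <= K%:E * P (G0 j))%E.
Proof.
move=> K0 hK.
set F := fun n => G0 j `&` slice j l n `&`
   pathj xi j @^-1` Fut h x ((n.+1)%:R / (l.+1)%:R).
have mF n : measurable (F n).
  by apply: measurableI; [apply: measurableI; [exact: G0_meas|exact: slice_meas]|exact: futpre_meas].
apply: (le_trans (measure_sigma_subadditive P mF (Eset_meas x j l) _)).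
  by move=> w [n Fn']; exists n => //.
apply: (le_trans (y := (\sum_(0 <= n <oo) (K%:E * P (G0 j `&` slice j l n)))%E)).
  apply: lee_nneseries => [n _ _|n _]; first exact: measure_ge0.
  rewrite /F.
  have FG : Fn j (G0 j `&` slice j l n) by apply: (Fn_setI hadm); [exact: G0_F|exact: slice_F].
  have [_ _ hQ] := indep_path' hadm hid j (Fut_meas h x ((n.+1)%:R / (l.+1)%:R)).
  rewrite [X in (X <= _)%E](_ : _ = (P (G0 j `&` slice j l n) *
     P (pathj xi 0 @^-1` Fut h x ((n.+1)%:R / (l.+1)%:R)))%E); last exact: hQ.
  rewrite [leRHS]muleC; apply: lee_wpmul2l; first exact: measure_ge0.
  apply: hK; apply: divr_ge0; exact: ler0n.
rewrite nneseriesZl; last by move=> n _; exact: measure_ge0.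
apply: lee_wpmul2l; first by rewrite lee_fin.
have := measure_bigcup P setT (fun n => G0 j `&` slice j l n) _ (@slice_triv j l).
rewrite (eq_eseriesl _ (Q := xpredT)); last by move=> n; rewrite /= in_setT.
move=> <-; last first.
  by move=> n _; apply: measurableI; [exact: G0_meas|exact: slice_meas].
apply: le_measure; rewrite ?inE.
- by apply: bigcupT_measurable => n; apply: measurableI; [exact: G0_meas|exact: slice_meas].
- exact: G0_meas.
by move=> w [n _ []].
Qed.


Lemma Hs_meas x j : measurable (Hs x j).
Proof. by apply: measurableI; [exact: G0_meas|exact: Hset_meas]. Qed.

Lemma PH_bound x j (K : R) : 0 <= K ->
  (forall z, 0 <= z -> (P (pathj xi 0 @^-1` Fut h x z) <= K%:E)%E) ->
  (P (Hs x j) <= K%:E * P (G0 j))%E.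
Proof.
move=> K0 hK.
set C := fun k => [set w | forall l, (k <= l)%N -> Eset x j l w].
have mC k : measurable (C k).
  by apply: mset_capS => l; apply: mset_imp => _; exact: Eset_meas.
have mU : measurable (\bigcup_k C k) by exact: bigcupT_measurable.
have hom : {homo C : n m / (n <= m)%N >-> (n <= m)%O}.
  move=> n m nm; apply/subsetPset => w hw l ml; apply: hw.
  exact: leq_trans ml.
have hc := nondecreasing_cvg_mu (mu := P) mC mU hom.
apply: (le_trans (y := P (\bigcup_k C k))).
  apply: le_measure; rewrite ?inE //; first exact: Hs_meas.
  by move=> w /Hs_sub [k hk]; exists k.
rewrite -(cvg_lim _ hc); last exact: ereal_hausdorff.
apply: lime_le; first by apply/cvg_ex; eexists; exact: hc.
apply: nearW => k /=.
apply: (le_trans (y := P (Eset x j k))); last exact: PE_bound.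
apply: le_measure; rewrite ?inE //; first exact: Eset_meas.
by move=> w; apply.
Qed.


Lemma series_opt (s : option nat) :
  (\sum_(0 <= j <oo) ((le_opt j.+1 s)%:R)%:E = opt_to_ereal s :> \bar R)%E.
Proof.
case: s => [n|] /=.
  rewrite (nneseries_split 0 n); last by move=> k _; rewrite lee_fin ler0n.
  rewrite eseries0; last by move=> i; rewrite add0n leqNgt => /negbTE -> .
  rewrite adde0 add0n sumEFin; congr EFin.
  rewrite (eq_big_nat _ _ (F2 := fun=> 1)); first by rewrite sumr_const_nat subn0.
  by move=> i /andP[_ ->].
apply/eqyP => A A0.
have := truncn_itv (ltW A0); set n := Num.truncn A => /andP[_ An].
rewrite (nneseries_split 0 n.+1); last by move=> k _; rewrite lee_fin ler0n.
apply: (le_trans (y := (\sum_(0 <= k < 0 + n.+1) ((true)%:R)%:E)%E)).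
  by rewrite sumEFin sumr_const_nat subn0 lee_fin ltW.
apply: lee_paddr; first by apply: nneseries_ge0 => k _ _; rewrite lee_fin ler0n.
by [].
Qed.

Lemma sum_G0 : (\sum_(0 <= j <oo) P (G0 j) <= \int[P]_w opt_to_ereal (sig w))%E.
Proof.
apply: (le_trans (y := (\sum_(0 <= j <oo) P [set w | le_opt j.+1 (sig w)])%E)).
  apply: lee_nneseries => [n _ _|n _]; first exact: measure_ge0.
  apply: le_measure; rewrite ?inE; [exact: G0_meas|exact: leopt_meas|].
  by move=> w [].
rewrite (eq_integral (fun w => \sum_(0 <= j <oo) ((\1_[set w | le_opt j.+1 (sig w)] w)%:E))%E); last first.
  move=> w _; rewrite -series_opt; apply: eq_eseriesr => j _.
  rewrite indicE; case: (boolP (le_opt j.+1 (sig w))) => hb.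
    by rewrite mem_set.
  by rewrite memNset //; apply/negP.
rewrite integral_nneseries //.
- apply: lee_nneseries => [n _ _|n _]; first exact: measure_ge0.
  by rewrite integral_indic ?setIT //; exact: leopt_meas.
- move=> n; apply/measurable_realfun.measurable_EFinP; apply: measurable_realfun.measurable_indic.
  exact: leopt_meas.
Qed.


Lemma key x (K : R) : 0 <= x -> 0 <= K ->
  (forall z, 0 <= z -> (P (pathj xi 0 @^-1` Fut h x z) <= K%:E)%E) ->
  (P (A2 xi h sig x) <= K%:E * \int[P]_w opt_to_ereal (sig w))%E.
Proof.
move=> x0 K0 hK.
apply: (le_trans (measure_sigma_subadditive P (fun j => Hs_meas x j) (A2_meas x sig_meas) _)).
  move=> w /(decomp x0) [j _ hj]; by exists j.
apply: (le_trans (y := (\sum_(0 <= j <oo) (K%:E * P (G0 j)))%E)).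
  apply: lee_nneseries => [n _ _|n _]; first exact: measure_ge0.
  exact: PH_bound.
rewrite nneseriesZl; last by move=> n _; exact: measure_ge0.
apply: lee_wpmul2l; first by rewrite lee_fin.
exact: sum_G0.
Qed.

End Main.

Unset Implicit Arguments.
Theorem lemma4 (d : measure_display) (T : measurableType d) (R : realType)
  (P : probability T R) (xi : nat -> T -> R) (m : R) (h : R -> R) :
  (* i.i.d. random variables *)
  (forall n, measurable_fun setT (xi n)) ->
  mutually_indep P xi ->
  ident_distr P xi ->
  (* finite mean -m < 0 *)
  0 < m ->
  P.-integrable setT (EFin \o xi 1%N) ->
  (\int[P]_w (xi 1%N w)%:E = (- m)%:E)%E ->
  (* long-tailed *)
  (forall x, 0 < tailF P (xi 1%N) x) ->
  (forall c, 0 < c ->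
     (tailF P (xi 1%N) (x - c) / tailF P (xi 1%N) x) @[x --> +oo] --> (1 : R)) ->
  (* h : R_+ -> R_+ with (h1)-(h4) *)
  (forall x, 0 <= x -> 0 <= h x) ->
  (forall x, 0 <= x -> h x <= x / 2) ->
  h x @[x --> +oo] --> +oo ->
  (tailF P (xi 1%N) (x - h x) / tailF P (xi 1%N) x) @[x --> +oo] --> (1 : R) ->
  (exists x0, forall x t, x0 <= x -> 0 <= t -> h (x + t) <= h x + t) ->
  (* delta_tau(x) -> 0 *)
  delta P xi h (tau_time xi) x @[x --> +oo] --> 0%E ->
  forall (Fn : nat -> set (set T)) (sigma : T -> option nat),
    admissible_filtration P xi Fn ->
    stopping_time Fn sigma ->
    finite_mean_time P sigma ->
    delta P xi h sigma x @[x --> +oo] --> 0%E.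
Proof.
move=> mxi _ hid _ _ _ hpos _ hh0 _ _ _ [x0 hh4] hdt Fn sig hadm hst hfm.
set E := (\int[P]_w opt_to_ereal (sig w))%E.
have E0 : (0 <= E)%E.
  by apply: integral_ge0 => w _; case: (sig w) => //= n; rewrite lee_fin ler0n.
have Efin : E \is a fin_num by rewrite ge0_fin_numE.
set e := fine E.
have e0 : 0 <= e by exact: fine_ge0.
have mle x : measurable [set w | xi 1%N w <= x].
  by apply: mset_bool; apply: measurable_realfun.measurable_fun_ler => //; exact: measurable_cst.
have tailmono x y : x <= y -> tailF P (xi 1%N) y <= tailF P (xi 1%N) x.
  move=> xy; rewrite /tailF /cdf lerD2l lerN2; apply: fine_le; try exact: Pfin.
  apply: le_measure; rewrite ?inE //.
  by move=> w /= hw; apply: le_trans hw xy.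
have ratio_ub s x y : x <= y ->
    ((fine (P (A2 xi h s y)) / tailF P (xi 1%N) y)%:E <= delta P xi h s x)%E.
  by move=> xy; apply: ereal_sup_ubound; exists y.
have delta_ge0 s x : (0 <= delta P xi h s x)%E.
  apply: le_trans (ratio_ub s x x (lexx x)); rewrite lee_fin divr_ge0 //.
    exact: fine_ge0.
  exact: ltW.
have delta_anti s x x' : x <= x' -> (delta P xi h s x' <= delta P xi h s x)%E.
  move=> xx'; apply: ereal_sup_le => _ [y hy <-]; exists y => //.
  exact: le_trans hy.
have bnd x : Num.max x0 0 <= x ->
    (delta P xi h sig x <= (e + 1)%:E * delta P xi h (tau_time xi) x)%E.
  rewrite ge_max => /andP[xx0 x0'].
  have [->|dfin] := eqVneq (delta P xi h (tau_time xi) x) +oo%E.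
    by rewrite mulry gtr0_sg ?mul1e ?leey // ltr_pwDr.
  have Dfin : delta P xi h (tau_time xi) x \is a fin_num.
    by rewrite ge0_fin_numE // ltey dfin.
  set D := fine (delta P xi h (tau_time xi) x).
  have D0 : 0 <= D by apply: fine_ge0.
  apply: ge_ereal_sup => _ [y xy <-].
  rewrite -(fineK Dfin) -EFinM lee_fin.
  have ty := hpos y.
  rewrite ler_pdivrMr //.
  have hK z : 0 <= z ->
      (P (pathj xi 0 @^-1` Fut h y z) <= (D * tailF P (xi 1%N) y)%:E)%E.
    move=> z0.
    have mA : measurable (A2 xi h (tau_time xi) (y + z)).
      by apply: A2_meas => // k; exact: tau_meas.
    apply: (le_trans (y := P (A2 xi h (tau_time xi) (y + z)))).
      apply: le_measure; rewrite ?inE //.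
        exact: (futpre_meas hadm hid).
      move=> w; apply: fut_tau hh4 _ z0; exact: le_trans xy.
    have yz : x <= y + z by apply: le_trans xy _; rewrite lerDl.
    have := ratio_ub (tau_time xi) x (y + z) yz.
    rewrite -(fineK Dfin) lee_fin ler_pdivrMr // => h1.
    rewrite -(fineK (Pfin P mA)) lee_fin; apply: le_trans h1 _.
    by rewrite ler_wpM2l // tailmono // lerDl.
  have := key hadm hid mxi hst (x := y) (K := D * tailF P (xi 1%N) y)
    (le_trans x0' xy) (mulr_ge0 D0 (ltW ty)) hK.
  rewrite -/E -(fineK Efin) -EFinM.
  have mAs : measurable (A2 xi h sig y) by apply: A2_meas => // k; exact: (sig_meas hadm hst).
  rewrite -(fineK (Pfin P mAs)) lee_fin => hk; apply: le_trans hk _.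
  rewrite -/e -/D; have ty' := ltW ty; move: ty'; set t := tailF P (xi 1%N) y => ty'.
  clearbody D t e; nra.
apply: (squeeze_cvge (f := fun=> 0%E) (h := fun x => ((e + 1)%:E * delta P xi h (tau_time xi) x)%E)).
- near=> x; rewrite delta_ge0 /=; apply: bnd.
  by near: x; apply: nbhs_pinfty_ge; rewrite num_real.
- exact: cvg_cst.
- rewrite -(mule0 (e + 1)%:E); apply: cvgeM => //; last exact: cvg_cst.
Unshelve. all: by end_near.
Qed.
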